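(* Let $(\mathcal A,\varphi,\mathcal F,\Phi)$ be a ncps of type B$'$ with associated infinitesimal ncps $(\mathcal B,\varphi,\varphi')$. Let $\mathcal A_1$ be a subalgebra of $\mathcal A$ containing $1_{\mathcal A}$ and $\mathcal F_1$ a subalgebra of $\mathcal F$. Then $(\mathcal A_1,\mathcal F_1)$ is cyclic-antimonotone independent in $(\mathcal A,\varphi,\mathcal F,\Phi)$ if and only if $\mathcal A_1':=\mathcal A_1\oplus\{0_{\mathcal F}\}$ and $\mathcal F_1':=\mathbb C1_{\mathcal A}\oplus\mathcal F_1$ are infinitesimally free in $(\mathcal B,\varphi,\varphi')$.
   Context: A ncps of type B$'$ is $(\mathcal A,\varphi,\mathcal F,\Phi)$ where $\mathcal A$ is a unital complex algebra, $\varphi:\mathcal A\to\mathbb C$ linear with $\varphi(1_{\mathcal A})=1$, $\mathcal F$ a complex algebra which is an $\mathcal A$-bimodule compatible with the multiplication of $\mathcal F$, and $\Phi:\mathcal F\to\mathbb C$ linear. The associated algebra is $\mathcal B=\mathcal A\oplus\mathcal F$ with product $(a_1,f_1)(a_2,f_2)=(a_1a_2,a_1f_2+f_1a_2+f_1f_2)$ and unit $1_{\mathcal A}$; the associated infinitesimal ncps is $(\mathcal B,\varphi,\varphi')$ with $\varphi(a+f):=\varphi(a)$, $\varphi'(a+f):=\Phi(f)$. $(\mathcal A_1,\mathcal F_1)$ is cyclic-antimonotone independent if $\Phi(a_0f_1a_1f_2\cdots a_{n-1}f_na_n)=\varphi(a_0a_n)\big[\prod_{i=1}^{n-1}\varphi(a_i)\big]\Phi(f_1\cdots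 f_n)$ for all $n\in\mathbb N$, $a_l\in\mathcal A_1$, $f_l\in\mathcal F_1$. In an infinitesimal ncps $(\mathcal B,\varphi,\varphi')$ ($\varphi(1)=1$, $\varphi'(1)=0$), unital subalgebras $(\mathcal B_i)_{i\in I}$ are infinitesimally free if for every $n\ge1$, $i_1,\dots,i_n\in I$ with $i_l\ne i_{l+1}$, and $b_l\in\mathcal B_{i_l}$ with $\varphi(b_l)=0$: $\varphi(b_1\cdots b_n)=0$, and $\varphi'(b_1\cdots b_n)=\varphi(b_1b_n)\varphi(b_2b_{n-1})\cdots\varphi(b_{(n-1)/2}b_{(n+3)/2})\varphi'(b_{(n+1)/2})$ if $n$ is odd and $i_1=i_n,\ i_2=i_{n-1},\dots,i_{(n-1)/2}=i_{(n+3)/2}$, while $\varphi'(b_1\cdots b_n)=0$ otherwise. *)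

(* Defs.v *)
From HB Require Import structures.
From mathcomp Require Import all_boot all_algebra.
From mathcomp Require Import reals complex.
Set Implicit Arguments. Unset Strict Implicit. Unset Printing Implicit Defensive.
Import GRing.Theory.
Local Open Scope ring_scope.

Section NCPS.
Variable R : realType.
Local Notation C := (R[i]).

(* A is a unital complex algebra (algType), F a complex vector space with a
   (possibly non-unital) associative bilinear multiplication [mulF], and an
   A-bimodule structure ([la] left action, [ra] right action) compatible with
   the multiplication of F. *)
Record ncpsB' (A : algType C) (F : lmodType C) := NcpsB' {
  phi : A -> C;
  Phi : F -> C;
  mulF : F -> F -> F;
  la : A -> F -> F;
  ra : F -> A -> F;
  phi_lin : forall (c : C) (x y : A), phi (c *: x + y) = c * phi x + phi y;
  phi1 : phi 1 = 1;
  Phi_lin : forall (c : C) (x y : F), Phi (c *: x + y) = c * Phi x + Phi y;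
  mulF_linl : forall (c : C) (x y z : F),
      mulF (c *: x + y) z = c *: mulF x z + mulF y z;
  mulF_linr : forall (c : C) (x y z : F),
      mulF z (c *: x + y) = c *: mulF z x + mulF z y;
  mulF_assoc : forall x y z : F, mulF x (mulF y z) = mulF (mulF x y) z;
  la_linl : forall (c : C) (a b : A) (f : F), la (c *: a + b) f = c *: la a f + la b f;
  la_linr : forall (c : C) (a : A) (f g : F), la a (c *: f + g) = c *: la a f + la a g;
  ra_linl : forall (c : C) (a : A) (f g : F), ra (c *: f + g) a = c *: ra f a + ra g a;
  ra_linr : forall (c : C) (a b : A) (f : F), ra f (c *: a + b) = c *: ra f a + ra f b;
  la1 : forall f : F, la 1 f = f;
  ra1 : forall f : F, ra f 1 = f;
  laM : forall (a b : A) (f : F), la (a * b) f = la a (la b f);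
  raM : forall (a b : A) (f : F), ra f (a * b) = ra (ra f a) b;
  la_ra : forall (a b : A) (f : F), la a (ra f b) = ra (la a f) b;
  la_mulF : forall (a : A) (f g : F), la a (mulF f g) = mulF (la a f) g;
  ra_mulF : forall (a : A) (f g : F), ra (mulF f g) a = mulF f (ra g a);
  mulF_ra_la : forall (a : A) (f g : F), mulF (ra f a) g = mulF f (la a g)
}.

Variables (A : algType C) (F : lmodType C) (S : ncpsB' A F).

(* The associated algebra B = A (+) F, with elements represented as pairs. *)
Definition Bmul (x y : A * F) : A * F :=
  (x.1 * y.1, la S x.1 y.2 + ra S x.2 y.1 + mulF S x.2 y.2).
Definition Bone : A * F := (1, 0).
Definition inA (a : A) : A * F := (a, 0).
Definition inF (f : F) : A * F := (0, f).
Definition Bprod (s : seq (A * F)) : A * F := foldr Bmul Bone s.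

Definition phiB (x : A * F) : C := phi S x.1.
Definition phiB' (x : A * F) : C := Phi S x.2.

Definition cyclic_antimonotone (A1 : {pred A}) (F1 : {pred F}) : Prop :=
  forall (n : nat) (a : nat -> A) (f : nat -> F),
    (1 <= n)%N ->
    (forall l, (l <= n)%N -> a l \in A1) ->
    (forall l, (1 <= l <= n)%N -> f l \in F1) ->
    Phi S (Bprod (inA (a 0%N) ::
              flatten [seq [:: inF (f l); inA (a l)] | l <- iota 1 n])).2
    = phi S (a 0%N * a n) * (\prod_(1 <= i < n) phi S (a i))
      * Phi S (Bprod [seq inF (f l) | l <- iota 1 n]).2.

Definition inf_free (I : eqType) (Bs : I -> A * F -> Prop) : Prop :=
  forall (N : nat) (ii : nat -> I) (b : nat -> A * F),
    (1 <= N)%N ->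
    (forall k, (k.+1 < N)%N -> ii k != ii k.+1) ->
    (forall k, (k < N)%N -> Bs (ii k) (b k)) ->
    (forall k, (k < N)%N -> phiB (b k) = 0) ->
    phiB (Bprod [seq b k | k <- iota 0 N]) = 0 /\
    phiB' (Bprod [seq b k | k <- iota 0 N]) =
      (if odd N && [forall k : 'I_N./2, ii k == ii (N.-1 - k)%N]
       then (\prod_(k < N./2) phiB (Bmul (b k) (b (N.-1 - k)%N)))
            * phiB' (b N./2)
       else 0).

Definition A1' (A1 : {pred A}) (x : A * F) : Prop :=
  x.1 \in A1 /\ x.2 = 0.
Definition F1' (F1 : {pred F}) (x : A * F) : Prop :=
  (exists c : C, x.1 = c *: 1) /\ x.2 \in F1.

End NCPS.

(* Main.v *)
Require Import Defs.
From HB Require Import structures.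
From mathcomp Require Import all_boot all_algebra.
From mathcomp Require Import reals complex.
From mathcomp Require Import ring zify.
Set Implicit Arguments. Unset Strict Implicit. Unset Printing Implicit Defensive.
Import GRing.Theory.
Local Open Scope ring_scope.

Section Main.
Variables (R : realType) (A : algType R[i]) (F : lmodType R[i]) (S : ncpsB' A F).
Local Notation C := (R[i]).
Local Notation phi := (phi S).
Local Notation Phi := (Phi S).
Local Notation la := (la S).
Local Notation ra := (ra S).
Local Notation mulF := (mulF S).
Local Notation Bmul := (Bmul S).
Local Notation Bprod := (Bprod S).
Local Notation iA := (@inA _ A F).
Local Notation iF := (@inF _ A F).
Local Notation Bone := (@Bone _ A F).

Lemma phiD x y : phi (x + y) = phi x + phi y.
Proof. by have := phi_lin S 1 x y; rewrite scale1r mul1r. Qed.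
Lemma phi0 : phi 0 = 0.
Proof. have := phiD 0 0; rewrite addr0 => h; apply: (addrI (phi 0)); by rewrite addr0 -h. Qed.
Lemma phiZ c x : phi (c *: x) = c * phi x.
Proof. by have := phi_lin S c x 0; rewrite addr0 phi0 addr0. Qed.
Lemma PhiD x y : Phi (x + y) = Phi x + Phi y.
Proof. by have := Phi_lin S 1 x y; rewrite scale1r mul1r. Qed.
Lemma Phi0 : Phi 0 = 0.
Proof. have := PhiD 0 0; rewrite addr0 => h; apply: (addrI (Phi 0)); by rewrite addr0 -h. Qed.
Lemma PhiZ c x : Phi (c *: x) = c * Phi x.
Proof. by have := Phi_lin S c x 0; rewrite addr0 Phi0 addr0. Qed.

Lemma laDl a b f : la (a + b) f = la a f + la b f.
Proof. by have := la_linl S 1 a b f; rewrite !scale1r. Qed.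
Lemma la0l f : la 0 f = 0.
Proof. have := laDl 0 0 f; rewrite addr0 => h; apply: (addrI (la 0 f)); by rewrite addr0 -h. Qed.
Lemma laZl c a f : la (c *: a) f = c *: la a f.
Proof. by have := la_linl S c a 0 f; rewrite addr0 la0l addr0. Qed.
Lemma laDr a f g : la a (f + g) = la a f + la a g.
Proof. by have := la_linr S 1 a f g; rewrite !scale1r. Qed.
Lemma la0r a : la a 0 = 0.
Proof. have := laDr a 0 0; rewrite addr0 => h; apply: (addrI (la a 0)); by rewrite addr0 -h. Qed.
Lemma laZr c a f : la a (c *: f) = c *: la a f.
Proof. by have := la_linr S c a f 0; rewrite addr0 la0r addr0. Qed.

Lemma raDl a f g : ra (f + g) a = ra f a + ra g a.
Proof. by have := ra_linl S 1 a f g; rewrite !scale1r. Qed.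
Lemma ra0l a : ra 0 a = 0.
Proof. have := raDl a 0 0; rewrite addr0 => h; apply: (addrI (ra 0 a)); by rewrite addr0 -h. Qed.
Lemma raZl c a f : ra (c *: f) a = c *: ra f a.
Proof. by have := ra_linl S c a f 0; rewrite addr0 ra0l addr0. Qed.
Lemma raDr a b f : ra f (a + b) = ra f a + ra f b.
Proof. by have := ra_linr S 1 a b f; rewrite !scale1r. Qed.
Lemma ra0r f : ra f 0 = 0.
Proof. have := raDr 0 0 f; rewrite addr0 => h; apply: (addrI (ra f 0)); by rewrite addr0 -h. Qed.
Lemma raZr c a f : ra f (c *: a) = c *: ra f a.
Proof. by have := ra_linr S c a 0 f; rewrite addr0 ra0r addr0. Qed.

Lemma mulFDl x y z : mulF (x + y) z = mulF x z + mulF y z.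
Proof. by have := mulF_linl S 1 x y z; rewrite !scale1r. Qed.
Lemma mulF0l z : mulF 0 z = 0.
Proof. have := mulFDl 0 0 z; rewrite addr0 => h; apply: (addrI (mulF 0 z)); by rewrite addr0 -h. Qed.
Lemma mulFDr x y z : mulF z (x + y) = mulF z x + mulF z y.
Proof. by have := mulF_linr S 1 x y z; rewrite !scale1r. Qed.
Lemma mulF0r z : mulF z 0 = 0.
Proof. have := mulFDr 0 0 z; rewrite addr0 => h; apply: (addrI (mulF z 0)); by rewrite addr0 -h. Qed.
Lemma mulFZr c x z : mulF z (c *: x) = c *: mulF z x.
Proof. by have := mulF_linr S c x 0 z; rewrite addr0 mulF0r addr0. Qed.

Lemma Bmul_iA a y : Bmul (iA a) y = (a * y.1, la a y.2).
Proof. by rewrite /Bmul /= ra0l mulF0l !addr0. Qed.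
Lemma Bmul_inF f g : Bmul (iF f) (iF g) = iF (mulF f g).
Proof. by rewrite /Bmul /inF /= mul0r la0l ra0r !add0r. Qed.
Lemma Bmul1l y : Bmul Bone y = y.
Proof. by case: y => a f; rewrite /Bmul /Defs.Bone /= mul1r la1 ra0l mulF0l !addr0. Qed.
Lemma Bmul1r y : Bmul y Bone = y.
Proof. by case: y => a f; rewrite /Bmul /Defs.Bone /= mulr1 la0r ra1 mulF0r addr0 add0r. Qed.
Lemma ac7 (V : zmodType) (t1 t2 t3 t4 t5 t6 t7 : V) :
  t1 + t2 + t3 + t4 + (t5 + t6 + t7) = t1 + (t2 + t4 + t6) + (t3 + t5 + t7).
Proof.
rewrite -!addrA; congr (_ + (_ + _)); rewrite addrCA; congr (_ + _).
by rewrite [RHS]addrCA; congr (_ + _); rewrite addrCA.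
Qed.

Lemma Bmul_assoc x y z : Bmul x (Bmul y z) = Bmul (Bmul x y) z.
Proof.
case: x => x1 x2; case: y => y1 y2; case: z => z1 z2; rewrite /Bmul /=.
congr (_, _); first by rewrite mulrA.
rewrite !laDr !mulFDr !raDl !mulFDl laM raM la_ra la_mulF mulF_ra_la ra_mulF mulF_assoc.
by rewrite ac7.
Qed.

Lemma Bprod_cat s1 s2 : Bprod (s1 ++ s2) = Bmul (Bprod s1) (Bprod s2).
Proof. elim: s1 => [|x s1 IH] /=; first by rewrite Bmul1l. by rewrite IH Bmul_assoc. Qed.

Lemma Bprod_cons x s : Bprod (x :: s) = Bmul x (Bprod s).
Proof. by []. Qed.

Definition PB (s : seq (A * F)) : C := Phi (Bprod s).2.
Arguments PB : simpl never.

Lemma LinL s1 s2 c x y :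
  PB (s1 ++ iA (c *: x + y) :: s2) = c * PB (s1 ++ iA x :: s2) + PB (s1 ++ iA y :: s2).
Proof.
rewrite /PB !Bprod_cat !Bprod_cons !Bmul_iA.
set P := Bprod s1; set Q := Bprod s2.
rewrite /Bmul /= laDl laZl !laDr !laZr mulrDl -scalerAl raDr raZr mulFDr mulFZr.
rewrite -!PhiZ -!PhiD; congr (Phi _).
rewrite !scalerDr; set p := c *: la _ _; set q := la P.1 (la y _); set r := c *: ra _ _; set s := ra P.2 (y * _); set t := c *: mulF _ _; set u := mulF P.2 (la y _).
by rewrite (addrACA p q r s) (addrACA (p + r) (q + s) t u).
Qed.

Definition SV N (ii : nat -> bool) (b : nat -> A * F) : C :=
  if N == 1%N then phiB' S (b 0%N)
  else if (N == 3%N) && ii 0%N then phiB S (Bmul (b 0%N) (b 2%N)) * phiB' S (b 1%N)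
  else 0.

Definition RHSv N (ii : nat -> bool) (b : nat -> A * F) : C :=
  if odd N && [forall k : 'I_N./2, ii k == ii (N.-1 - k)%N]
  then (\prod_(k < N./2) phiB S (Bmul (b k) (b (N.-1 - k)%N))) * phiB' S (b N./2)
  else 0.

Lemma K1 N ii b : (0 < N)%N -> (forall k, (k.+1 < N)%N -> ii k != ii k.+1) ->
  (forall k, (k < N)%N -> ~~ ii k -> (b k).1 = 0) -> RHSv N ii b = SV N ii b.
Proof.
move=> N0 alt F0; rewrite /RHSv /SV.
case: (eqVneq N 1%N) => [->|N1].
  have -> : [forall k : 'I_(1./2), ii k == ii (0 - k)%N] = true by apply/forallP => -[].
  by rewrite /= big_ord0 mul1r.
case: (boolP ((N == 3%N) && ii 0%N)) => [/andP[/eqP N3 i0]|H3].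
  subst N.
  have a0 := alt 0%N erefl; have a1 := alt 1%N erefl.
  have -> : [forall k : 'I_(3./2), ii k == ii (3.-1 - k)%N] = true.
    apply/forallP => -[[|//] ?] /=.
    by move: a0 a1; case: (ii 0%N); case: (ii 1%N); case: (ii 2%N).
  by rewrite /= big_ord1.

case: ifP => // /andP[oddN /forallP sym].
have N3 : (3 <= N)%N.
  case: N N0 N1 oddN {sym alt F0 H3} => [|[|[|N]]] //.
suff [k [Hk1 Hk2]] : exists k : 'I_N./2, ~~ ii k /\ ~~ ii (N.-1 - k)%N.
  rewrite (bigD1 k) //= /phiB /Bmul /= F0 ?mul0r ?phi0 ?mul0r //.
  by apply: (leq_trans (ltn_ord k)); rewrite leq_half_double -addnn; lia.
have Nh : (0 < N./2)%N by case: N N3 {sym alt F0 H3 oddN N1 N0} => [|[|[|N]]].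
case i0: (ii 0%N).
  have N5 : (1 < N./2)%N.
    move: H3; rewrite i0 andbT => N3'.
    case: N N3 N3' oddN {sym alt F0 N1 N0 Nh i0} => [|[|[|[|[|N]]]]] //.
  exists (Ordinal N5); have := sym (Ordinal N5); rewrite /=.
  have i1 : ii 1%N = false by move: (alt 0%N (ltnW N3)); rewrite i0; case: (ii 1%N).
  by rewrite i1 => /eqP <-.
exists (Ordinal Nh); have := sym (Ordinal Nh).
by rewrite [nat_of_ord _]/= i0 => /eqP <-.
Qed.

Variables (A1 : {pred A}) (F1 : {pred F}).
Hypotheses (A1_1 : 1 \in A1)
    (A1_D : forall x y, x \in A1 -> y \in A1 -> x + y \in A1)
    (A1_Z : forall (c : R[i]) x, x \in A1 -> c *: x \in A1)
    (A1_M : forall x y, x \in A1 -> y \in A1 -> x * y \in A1)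
    (F1_0 : 0 \in F1)
    (F1_D : forall f g, f \in F1 -> g \in F1 -> f + g \in F1)
    (F1_Z : forall (c : R[i]) f, f \in F1 -> c *: f \in F1)
    (F1_M : forall f g, f \in F1 -> g \in F1 -> mulF f g \in F1).

Local Notation Bs := (fun i : bool => if i then A1' A1 else F1' F1).
Local Notation IF := (inf_free S Bs).
Local Notation CA := (cyclic_antimonotone S A1 F1).

Definition tok := (bool * (A * F))%type.
Definition good (t : tok) : bool :=
  if t.1 then [&& t.2.1 \in A1, t.2.2 == 0 & phi t.2.1 == 0]
  else (t.2.1 == 0) && (t.2.2 \in F1).
Definition altr : rel tok := fun x y => x.1 != y.1.
Definition dt : tok := (false, (0, 0)).
Definition SVt (ts : seq tok) : C :=
  SV (size ts) (fun k => (nth dt ts k).1) (fun k => (nth dt ts k).2).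

Lemma IFtok : IF -> forall ts, (0 < size ts)%N -> sorted altr ts -> all good ts ->
  PB (map snd ts) = SVt ts.
Proof.
move=> H ts s0 /(sortedP dt) alt /(all_nthP dt) gd.
have E : [seq (nth dt ts k).2 | k <- iota 0 (size ts)] = map snd ts.
  by rewrite -[in RHS](mkseq_nth dt ts) /mkseq -map_comp.
have F0 : forall k, (k < size ts)%N -> ~~ (nth dt ts k).1 -> (nth dt ts k).2.1 = 0.
  move=> k hk; have := gd k hk; rewrite /good.
  by case: (nth dt ts k) => [[|] [a f]] //= /andP[/eqP].
have := H (size ts) (fun k => (nth dt ts k).1) (fun k => (nth dt ts k).2) s0 alt.
case.
- move=> k hk; have := gd k hk; rewrite /good.
  case: (nth dt ts k) => [[|] [a f]] /=.
    by case/and3P => aA /eqP f0 _.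
  by case/andP => /eqP -> fF; split => //; exists 0; rewrite scale0r.
- move=> k hk; have := gd k hk; rewrite /good /phiB.
  case: (nth dt ts k) => [[|] [a f]] /=.
    by case/and3P => _ _ /eqP.
  by case/andP => /eqP -> _; rewrite phi0.
move=> _; rewrite E /phiB' /PB => ->.
exact: K1.
Qed.

Definition wordP (a0 : A) (ps : seq (F * A)) : seq (A * F) :=
  iA a0 :: flatten [seq [:: iF p.1; iA p.2] | p <- ps].
Definition tokM (qs : seq (F * A)) (fn : F) : seq tok :=
  flatten [seq [:: (false, iF p.1); (true, iA p.2)] | p <- qs] ++ [:: (false, iF fn)].
Definition memP (p : F * A) := (p.1 \in F1) && (p.2 \in A1).

Lemma flat_rcons qs fn y :
  flatten [seq [:: iF p.1; iA p.2] | p <- rcons qs (fn, y)] = map snd (tokM qs fn) ++ [:: iA y].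
Proof. by elim: qs => [|p qs IH] //=; rewrite IH. Qed.

Lemma PB1l s : PB (iA 1 :: s) = PB s.
Proof. by rewrite /PB Bprod_cons Bmul1l. Qed.
Lemma PB1r s : PB (s ++ [:: iA 1]) = PB s.
Proof. by rewrite /PB Bprod_cat !Bprod_cons Bmul1l Bmul1r. Qed.
Lemma LinL0 s2 c x y :
  PB (iA (c *: x + y) :: s2) = c * PB (iA x :: s2) + PB (iA y :: s2).
Proof. exact: (LinL [::] s2 c x y). Qed.
Lemma LinR s1 c x y :
  PB (s1 ++ [:: iA (c *: x + y)]) = c * PB (s1 ++ [:: iA x]) + PB (s1 ++ [:: iA y]).
Proof. exact: (LinL s1 [::] c x y). Qed.

Lemma path_tokM qs fn t tl : t.1 = true ->
  (tl = [::] \/ exists y, tl = [:: (true, y)]) -> path altr t (tokM qs fn ++ tl).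
Proof.
elim: qs t => [|p qs IH] t t1 htl /=.
  by rewrite /altr t1 /=; case: htl => [->|[y ->]].
by rewrite /altr t1 /=; exact: IH.
Qed.

Lemma sorted_tokM qs fn tl :
  (tl = [::] \/ exists y, tl = [:: (true, y)]) -> sorted altr (tokM qs fn ++ tl).
Proof.
case: qs => [|p qs] htl /=; first by case: htl => [->|[y ->]].
exact: path_tokM.
Qed.

Lemma size_tokM qs fn : size (tokM qs fn) = (size qs).*2.+1.
Proof. by elim: qs => //= p qs ->; rewrite doubleS. Qed.

Lemma good_tokM qs fn : fn \in F1 -> all memP qs -> all (fun p => phi p.2 == 0) qs ->
  all good (tokM qs fn).
Proof.
elim: qs => [|p qs IH] fF /=; first by rewrite /good /= eqxx fF.
case/andP => /andP[pF pA] mq /andP[/eqP pc cq].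
rewrite /good /= !eqxx pF pA pc /=; apply/andP; split; [exact/eqP | exact: IH].
Qed.

Lemma SVt0 ts : size ts != 1%N -> ~~ ((size ts == 3%N) && (nth dt ts 0).1) -> SVt ts = 0.
Proof. by move=> h1 h2; rewrite /SVt /SV (negbTE h1) (negbTE h2). Qed.

Lemma decomp a : a \in A1 -> exists2 u, u \in A1 & (phi u = 0 /\ a = phi a *: 1 + u).
Proof.
move=> aA; exists (a - phi a *: 1).
  by rewrite -scaleNr; apply: A1_D => //; exact: A1_Z.
split; last by rewrite addrC subrK.
by rewrite phiD -scaleNr phiZ (phi1 S) mulr1 subrr.
Qed.

Lemma base : IF -> forall a0 qs fn an, a0 \in A1 -> an \in A1 -> fn \in F1 ->
  all memP qs -> all (fun p => phi p.2 == 0) qs ->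
  PB (wordP a0 (rcons qs (fn, an))) = if qs is [::] then phi (a0 * an) * Phi fn else 0.
Proof.
move=> H a0 qs fn an a0A anA fF mq cq.
case: (decomp a0A) => u0 u0A [u0c E0]; case: (decomp anA) => un unA [unc En].
move: E0 En; set c0 := phi a0; set cn := phi an; clearbody c0 cn => -> ->.
rewrite /wordP flat_rcons LinL0 -!cat_cons !LinR !PB1r !cat_cons !PB1l.
set M := tokM qs fn.
have gM : all good M by exact: good_tokM.
have gu0 : good (true, iA u0) by rewrite /good /= u0A u0c; apply/and3P; split.
have gun : good (true, iA un) by rewrite /good /= unA unc; apply/and3P; split.
have e1 : PB (map snd M) = SVt M.
  apply: IFtok => //; first by rewrite size_tokM.
  by have := sorted_tokM qs fn (or_introl erefl); rewrite cats0.
have e2 : PB (map snd M ++ [:: iA un]) = SVt (M ++ [:: (true, iA un)]).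
  rewrite (_ : map snd M ++ [:: iA un] = map snd (M ++ [:: (true, iA un)])); last by rewrite [RHS]map_cat.
  apply: IFtok => //.
  - by rewrite size_cat size_tokM.
  - exact: sorted_tokM (or_intror (ex_intro _ _ erefl)).
  - by rewrite all_cat gM /= gun.
have e3 : PB (iA u0 :: map snd M) = SVt ((true, iA u0) :: M).
  rewrite (_ : iA u0 :: map snd M = map snd ((true, iA u0) :: M)) //.
  apply: IFtok => //=; last by rewrite gu0.
  by have := @path_tokM qs fn (true, iA u0) [::] erefl (or_introl erefl); rewrite cats0.
have e4 : PB (iA u0 :: map snd M ++ [:: iA un]) = SVt ((true, iA u0) :: M ++ [:: (true, iA un)]).
  rewrite (_ : iA u0 :: map snd M ++ [:: iA un] = map snd ((true, iA u0) :: M ++ [:: (true, iA un)])); last by rewrite [RHS]/= [in RHS]map_cat.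
  apply: IFtok => //=.
  - exact: (@path_tokM qs fn (true, iA u0) _ erefl (or_intror (ex_intro _ _ erefl))).
  - by rewrite gu0 all_cat gM /= gun.
rewrite e1 e2 e3 e4 {e1 e2 e3 e4}; clear gM; rewrite /M; case: qs mq cq {M} => [|p qs'] mq cq.
  rewrite /SVt /SV /= /phiB /phiB' /=.
  rewrite mulrDl !mulrDr -!scalerAl -!scalerAr !mul1r !mulr1 !phiD !phiZ (phi1 S) u0c unc.
  ring.
rewrite !SVt0 ?mulr0 ?addr0 //= ?size_cat ?size_tokM //=.
all: rewrite ?mulr0 ?andbT ?andbF //; apply/eqP; lia.
Qed.

Definition lastA (ps : seq (F * A)) : A := (last (0, 1) ps).2.
Fixpoint iprod (ps : seq (F * A)) : C :=
  match ps with
  | [::] => 1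
  | [:: _] => 1
  | p :: ((_ :: _) as ps') => phi p.2 * iprod ps'
  end.
Definition PhiF (ps : seq (F * A)) : C := PB [seq iF p.1 | p <- ps].

Lemma wordP_cat2 a0 ms0 rest :
  wordP a0 (ms0 ++ rest) = wordP a0 ms0 ++ flatten [seq [:: iF p.1; iA p.2] | p <- rest].
Proof. by rewrite /wordP map_cat flatten_cat. Qed.

Lemma LinW a0 ms0 f c x y rest :
  PB (wordP a0 (ms0 ++ (f, c *: x + y) :: rest)) =
  c * PB (wordP a0 (ms0 ++ (f, x) :: rest)) + PB (wordP a0 (ms0 ++ (f, y) :: rest)).
Proof.
rewrite !wordP_cat2.
have E : forall z, wordP a0 ms0 ++ flatten [seq [:: iF p.1; iA p.2] | p <- (f, z) :: rest]
  = (wordP a0 ms0 ++ [:: iF f]) ++ iA z :: flatten [seq [:: iF p.1; iA p.2] | p <- rest].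
  by move=> z; rewrite -catA.
by rewrite !E LinL.
Qed.

Lemma Bprod_merge s1 s2 f g :
  Bprod (s1 ++ iF f :: iA 1 :: iF g :: s2) = Bprod (s1 ++ iF (mulF f g) :: s2).
Proof. by rewrite !Bprod_cat !Bprod_cons Bmul1l (Bmul_assoc (iF f)) Bmul_inF. Qed.

Lemma Bprod_mergeF f g s : Bprod (iF f :: iF g :: s) = Bprod (iF (mulF f g) :: s).
Proof. by rewrite !Bprod_cons Bmul_assoc Bmul_inF. Qed.

Lemma merge a0 ms0 f g a' r :
  PB (wordP a0 (ms0 ++ (f, 1) :: (g, a') :: r)) = PB (wordP a0 (ms0 ++ (mulF f g, a') :: r)).
Proof. rewrite !wordP_cat2 /PB; congr (Phi (_).2); exact: Bprod_merge. Qed.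

Lemma PB1 f : PB [:: iF f] = Phi f.
Proof. by rewrite /PB Bprod_cons Bmul1r. Qed.

Lemma Tz : IF -> forall r' p a0 ms0, a0 \in A1 -> memP p -> all memP ms0 -> all memP r' ->
  all (fun q => phi q.2 == 0) ms0 -> ms0 != [::] -> PB (wordP a0 (ms0 ++ p :: r')) = 0.
Proof.
move=> H; elim=> [|q r' IH] [f a] a0 ms0 a0A /andP[/= fF aA] m0 mr c0 n0.
  by rewrite cats1 base //; case: ms0 n0 {m0 c0}.
case: (decomp aA) => u uA [uc Ea]; rewrite Ea LinW.
case: q mr => g a' /andP[/andP[/= gF a'A] mr].
rewrite merge IH //; last by rewrite /memP /= F1_M.
rewrite -cat_rcons IH //.
- by rewrite mulr0 add0r.
- by rewrite /memP /= gF.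
- by rewrite all_rcons /memP /= fF uA m0.
- by rewrite all_rcons /= uc eqxx.
- by case: (ms0) {m0 c0 n0}.
Qed.

Lemma last_snd r (x y : F * A) : x.2 = y.2 -> (last x r).2 = (last y r).2.
Proof. by case: r. Qed.

Lemma Sl : IF -> forall r p a0, a0 \in A1 -> memP p -> all memP r ->
  PB (wordP a0 (p :: r)) = phi (a0 * lastA (p :: r)) * iprod (p :: r) * PhiF (p :: r).
Proof.
move=> H; elim=> [|q r IH] [f a] a0 a0A /andP[/= fF aA] mr.
  have := base H (qs := [::]) a0A aA fF (erefl true) (erefl true); rewrite /= => ->.
  by rewrite /lastA /= mulr1 /PhiF PB1.
case: (decomp aA) => u uA [uc Ea].
rewrite {1}Ea (LinW a0 [::]).
case: q mr => g a' /andP[/andP[/= gF a'A] mr].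
rewrite (Tz H (r' := r) (p := (g, a')) (a0 := a0) (ms0 := [:: (f, u)])) //; last first.
- by rewrite /= uc eqxx.
- by rewrite /memP /= fF uA.
- by rewrite /memP /= gF.
rewrite (merge a0 [::]) /= IH //; last by rewrite /memP /= F1_M.
have -> : lastA [:: (f, a), (g, a') & r] = lastA ((mulF f g, a') :: r).
  by rewrite /lastA /=; apply: last_snd.
have -> : PhiF [:: (f, a), (g, a') & r] = PhiF ((mulF f g, a') :: r).
  by rewrite /PhiF !map_cons /PB Bprod_mergeF.
by rewrite addr0; case: r {IH mr} => [|z r] /=; ring.
Qed.

Section Conv.
Variables (a : nat -> A) (f : nat -> F).

Lemma L1 n : iA (a 0%N) :: flatten [seq [:: iF (f l); iA (a l)] | l <- iota 1 n]
  = wordP (a 0%N) [seq (f l, a l) | l <- iota 1 n].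
Proof. by rewrite /wordP -map_comp. Qed.

Lemma L2 n : [seq iF (f l) | l <- iota 1 n] = [seq iF p.1 | p <- [seq (f l, a l) | l <- iota 1 n]].
Proof. by rewrite -map_comp. Qed.

Lemma last_iota m k : last m (iota m.+1 k) = (m + k)%N.
Proof. by elim: k m => [|k IH] m /=; [rewrite addn0 | rewrite IH addSnnS]. Qed.

Lemma L3 n : (0 < n)%N -> lastA [seq (f l, a l) | l <- iota 1 n] = a n.
Proof.
case: n => // n _; rewrite /lastA /= (last_map (fun l => (f l, a l))) /=.
by rewrite last_iota add1n.
Qed.

Lemma L4 m k : iprod [seq (f l, a l) | l <- iota m k.+1] = \prod_(m <= i < m + k) phi (a i).
Proof.
elim: k m => [|k IH] m; first by rewrite addn0 big_geq.
rewrite [iota _ _]/= map_cons [iota _ _]/= map_cons.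
have h : (m < m + k.+1)%N by lia.
by rewrite (big_ltn h) -addSnnS -IH.
Qed.
End Conv.

Lemma K3 : IF -> CA.
Proof.
move=> H n a f n1 aA fF.
case: n n1 aA fF => // n _ aA fF.
rewrite (L1 a f) (L2 a f) -(L3 a f (ltn0Sn n)).
have -> : (\prod_(1 <= i < n.+1) phi (a i)) = iprod [seq (f l, a l) | l <- iota 1 n.+1].
  by rewrite L4 add1n.
rewrite [iota 1 _]/= map_cons.
apply: Sl => //.
- exact: aA.
- by rewrite /memP /= aA // fF.
- apply/allP => p /mapP [l]; rewrite mem_iota => /andP[l2 l3] ->.
  by rewrite /memP /= aA ?fF; [|lia|lia].
Qed.

Lemma iotaS_map m k : iota m.+1 k = map succn (iota m k).
Proof. by elim: k m => //= k IH m; rewrite IH. Qed.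

Lemma CA_list : CA -> forall a0 ps, ps != [::] -> a0 \in A1 -> all memP ps ->
  PB (wordP a0 ps) = phi (a0 * lastA ps) * iprod ps * PhiF ps.
Proof.
move=> H a0 ps ps0 a0A mp.
pose a l := if l is l'.+1 then (nth (0, 1) ps l').2 else a0.
pose f l := (nth (0, 1) ps l.-1).1.
have Eps : [seq (f l, a l) | l <- iota 1 (size ps)] = ps.
  rewrite -[in RHS](mkseq_nth (0, 1) ps) /mkseq iotaS_map -map_comp.
  by apply: eq_map => i; rewrite /f /=; case: (nth _ ps i).
have memn : forall l, (l < size ps)%N -> memP (nth (0, 1) ps l).
  by move=> l hl; apply: (allP mp); exact: mem_nth.
have ps1 : (0 < size ps)%N by case: (ps) ps0.
have aA : forall l, (l <= size ps)%N -> a l \in A1.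
  case=> [|l] //= hl; by case/andP: (memn l hl).
have fF : forall l, (1 <= l <= size ps)%N -> f l \in F1.
  case=> [//|l] /= hl; by case/andP: (memn l hl).
have := H (size ps) a f ps1 aA fF.
rewrite (L1 a f) (L2 a f) -(L3 a f ps1) Eps.
move: ps1 Eps; case E: (size ps) => [//|k] _ Eps.
have -> : \prod_(1 <= i < k.+1) phi (a i) = iprod ps.
  by rewrite -[in RHS]Eps (L4 a f 1 k) add1n.
by rewrite /PB /PhiF.
Qed.

Fixpoint pairs (ts : seq tok) : seq (F * A) :=
  match ts with
  | y :: x :: rest => (y.2.2, x.2.1) :: pairs rest
  | [:: y] => [:: (y.2.2, 1)]
  | [::] => [::]
  end.

Lemma goodF t : good t -> t.1 = false -> t.2 = iF t.2.2 /\ t.2.2 \in F1.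
Proof. by case: t => [[] [u g]] //; rewrite /good /= => /andP[/eqP -> ?]. Qed.
Lemma goodA t : good t -> t.1 = true -> [/\ t.2 = iA t.2.1, t.2.1 \in A1 & phi t.2.1 = 0].
Proof. by case: t => [[] [u g]] //; rewrite /good /= => /and3P[? /eqP -> /eqP ?]. Qed.

Lemma pairs_ok n ts : (size ts <= n)%N -> sorted altr ts -> all good ts ->
  (if ts is t :: _ then t.1 = false else True) ->
  Bprod (map snd ts) = Bprod (flatten [seq [:: iF p.1; iA p.2] | p <- pairs ts]) /\
  all memP (pairs ts).
Proof.
elim: n ts => [|n IH] [|y [|x rest]] // hs so gd hy; try by split.
- have [gy _] := andP gd; have [E yF] := goodF gy hy.
  split; last by rewrite /= /memP /= yF A1_1.
  by rewrite map_cons Bprod_cons E (_ : flatten _ = [:: iF y.2.2; iA 1]) // !Bprod_cons Bmul1l.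
- move: so gd => /= /andP[yx so] /and3P[gy gx gr].
  have [Ey yF] := goodF gy hy.
  have xt : x.1 = true by move: yx; rewrite /altr hy; case: (x.1).
  have [Ex xA _] := goodA gx xt.
  have [IH1 IH2] : Bprod (map snd rest) =
      Bprod (flatten [seq [:: iF p.1; iA p.2] | p <- pairs rest]) /\ all memP (pairs rest).
    apply: IH.
    - by move: hs => /=; lia.
    - exact: (subseq_sorted _ (subseq_cons _ _) so) || exact: (path_sorted so).
    - exact: gr.
    - case: rest so {hs gr} => // z r /= /andP[xz _].
      by move: xz; rewrite /altr xt; case: (z.1).
  split; last by rewrite /= /memP /= yF xA.
  by rewrite Ey Ex IH1.
Qed.

Lemma CAtok : CA -> forall ts, (0 < size ts)%N -> sorted altr ts -> all good ts ->
  PB (map snd ts) = SVt ts.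
Proof.
move=> H [//|t ts] _ so gd.
case: ts so gd => [|y rest] so gd.
  by rewrite /SVt /SV /= /phiB' /PB Bprod_cons Bmul1r.
move: (so) (gd) => /= /andP[ty so'] /andP[gt gd'].
case tt: (t.1).
- have [Et tA tc] := goodA gt tt.
  have yt : y.1 = false by move: ty; rewrite /altr tt; case: (y.1).
  have [Pok' Pm'] := pairs_ok (n := size (y :: rest)) (leqnn _) so' gd' yt.
  have -> : PB (map snd [:: t, y & rest]) = PB (wordP t.2.1 (pairs (y :: rest))).
    by rewrite /PB map_cons Bprod_cons Pok' Et.
  rewrite CA_list //; last by case: (rest).
  case: rest so gd so' gd' Pok' Pm' => [|z [|w r]] so gd so' gd' _ _.
  + by rewrite /lastA /= !mulr1 tc mul0r SVt0.
  + by rewrite /SVt /SV /= /phiB /phiB' /= mulr1 /PhiF PB1 tt.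
  + move: so' gd' => /= /andP[yz _] /andP[_ /andP[gz _]].
    have zt : z.1 = true by move: yz; rewrite /altr yt; case: (z.1).
    have [_ _ zc] := goodA gz zt.
    rewrite SVt0 //=.
    by case: r {so gd} => [|v r] /=; rewrite zc mul0r mulr0 mul0r.
- have [Pok2 Pm2] := pairs_ok (n := size [:: t, y & rest]) (leqnn _) so gd tt.
  have yt : y.1 = true by move: ty; rewrite /altr tt; case: (y.1).
  have [gy _] := andP gd'.
  have [Ey yA yc] := goodA gy yt.
  have -> : PB [:: t.2, y.2 & [seq i.2 | i <- rest]] = PB (wordP 1 (pairs [:: t, y & rest])).
    by rewrite /wordP PB1l /PB -Pok2.
  rewrite CA_list //.
  case: rest so gd so' gd' Pok2 Pm2 => [|z r] so gd so' gd' _ _.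
  + by rewrite /lastA /= mul1r yc !mul0r SVt0.
  + rewrite SVt0 //=; last by rewrite tt andbF.
    by case: r {so gd so' gd'} => [|v r] /=; rewrite yc mul0r mulr0 mul0r.
Qed.

Lemma K2 : CA -> IF.
Proof.
move=> H N ii b N1 alt Bsb cb.
have F0 : forall k, (k < N)%N -> ~~ ii k -> (b k).1 = 0.
  move=> k hk nk; have := Bsb k hk; rewrite (negbTE nk) => -[[c Ec] _].
  have := cb k hk; rewrite /phiB; move: Ec; case: (b k) => u v /= ->.
  by rewrite phiZ (phi1 S) mulr1 => ->; rewrite scale0r.
set ts := [seq (ii k, b k) | k <- iota 0 N].
have sts : size ts = N by rewrite size_map size_iota.
have nE : forall k, (k < N)%N -> nth dt ts k = (ii k, b k).
  by move=> k hk; rewrite (nth_map 0%N) ?size_iota // nth_iota // add0n.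
have E : [seq b k | k <- iota 0 N] = map snd ts by rewrite -map_comp.
split.
  clear sts nE E ts.
  case: N N1 alt Bsb cb F0 => [|[|N]] // _ alt Bsb cb F0.
    by rewrite /phiB /= mulr1; exact: (cb 0%N).
  rewrite /phiB /=.
  have a0 := alt 0%N erefl.
  case: (boolP (ii 0%N)) => i0.
    have i1 : ~~ ii 1%N by move: a0; rewrite i0; case: (ii 1%N).
    by rewrite (F0 1%N) // mul0r mulr0 phi0.
  by rewrite (F0 0%N) // mul0r phi0.
rewrite /phiB' E.
have -> : Phi (Bprod (map snd ts)).2 = SVt ts.
  apply: CAtok => //.
  - by rewrite sts.
  - apply/(sortedP dt) => k hk; rewrite sts in hk.
    by rewrite !nE //; [exact: alt | lia].
  - apply/(all_nthP dt) => k hk; rewrite sts in hk; rewrite nE // /good /=.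
    have := Bsb k hk; have := cb k hk; rewrite /phiB.
    case ik: (ii k) => /= c0.
      by case => -> ->; rewrite eqxx c0 eqxx.
    by case => _ ->; rewrite (F0 k) ?ik // eqxx.
transitivity (SV N ii b); last exact: (esym (K1 N1 alt F0)).
rewrite /SVt /SV sts.
case: (eqVneq N 1%N) => [e|n1]; first by rewrite nE // e.
case: (eqVneq N 3%N) => [e|n3] //=.
by rewrite !nE // e.
Qed.

Lemma mainL : CA <-> IF.
Proof. by split; [exact: K2 | exact: K3]. Qed.
End Main.

Unset Implicit Arguments.

Theorem proposition3p1 (R : realType) (A : algType R[i]) (F : lmodType R[i])
    (S : ncpsB' A F) (A1 : {pred A}) (F1 : {pred F})
    (A1_1 : 1 \in A1)
    (A1_D : forall x y, x \in A1 -> y \in A1 -> x + y \in A1)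
    (A1_Z : forall (c : R[i]) x, x \in A1 -> c *: x \in A1)
    (A1_M : forall x y, x \in A1 -> y \in A1 -> x * y \in A1)
    (F1_0 : 0 \in F1)
    (F1_D : forall f g, f \in F1 -> g \in F1 -> f + g \in F1)
    (F1_Z : forall (c : R[i]) f, f \in F1 -> c *: f \in F1)
    (F1_M : forall f g, f \in F1 -> g \in F1 -> mulF S f g \in F1) :
  cyclic_antimonotone S A1 F1 <->
  inf_free S (fun i : bool => if i then A1' A1 else F1' F1).
Proof. exact: (mainL A1_1 A1_D A1_Z F1_0 F1_M). Qed.
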